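(* Suppose $0<\lambda\le\frac12$ and $\tau>0$. There exists a universal constant $c_0\in(0,1)$ such that the following holds. Let $\mu=\frac{c_0\lambda}{\tau}$ and let $p_0:\mathbb{R}\to[0,\infty)$ be the probability density $p_0(x)=\frac\tau4$ for $|x|\le\frac1\tau$ and $p_0(x)=\frac{1}{4\tau x^2}$ for $|x|>\frac1\tau$. Let $h:\mathbb{R}\to\mathbb{C}$ be the purely imaginary function $$h(t)=\begin{cases}0,&t<-2\tau,\\-j(-t),&-2\tau\le t\le-\tau,\\ k(t),&-\tau<t<\tau,\\ j(t),&\tau\le t\le2\tau,\\0,&t>2\tau,\end{cases}$$ with $k(t)=2i\frac{1-\lambda}{\lambda}\sin(t\mu)$ and $j(t)=2i\frac{1-\lambda}{\lambda}\sin(\tau\mu)\frac{2\tau-t}{\tau}$. Define the real-valued function $\Delta=-\frac{\hat h}{2\pi}$, where $\hat h(x)=\int e^{-itx}h(t)\,dt$. Then $p_1=p_0+\Delta$ is a probability density function. *)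

(* Defs.v *)
From Stdlib Require Import Reals.
From Coquelicot Require Import Coquelicot.
Open Scope R_scope.

Definition cexp (z : C) : C :=
  (exp (Re z) * cos (Im z), exp (Re z) * sin (Im z)).

Definition p0F (tau x : R) : R :=
  if Rle_dec (Rabs x) (/ tau) then tau / 4 else / (4 * tau * x ^ 2).

Definition kfun (lam mu t : R) : C :=
  Cmult (0, 1) (RtoC (2 * (1 - lam) / lam * sin (t * mu))).

Definition jfun (lam tau mu t : R) : C :=
  Cmult (0, 1) (RtoC (2 * (1 - lam) / lam * sin (tau * mu) * ((2 * tau - t) / tau))).

Definition hfun (lam tau mu t : R) : C :=
  if Rlt_dec t (- (2 * tau)) then RtoC 0
  else if Rle_dec t (- tau) then Copp (jfun lam tau mu (- t))
  else if Rlt_dec t tau then kfun lam mu t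
  else if Rle_dec t (2 * tau) then jfun lam tau mu t
  else RtoC 0.

Definition fourier (f : R -> C) (x : R) : C :=
  RInt_gen (V := C_R_CompleteNormedModule)
    (fun t => Cmult (cexp (0, - (t * x))) (f t))
    (Rbar_locally m_infty) (Rbar_locally p_infty).

Definition DeltaF (lam tau mu : R) (x : R) : C :=
  Cmult (RtoC (- / (2 * PI))) (fourier (hfun lam tau mu) x).

Definition p1F (lam tau mu : R) (x : R) : C :=
  Cplus (RtoC (p0F tau x)) (DeltaF lam tau mu x).

Definition is_pdf (f : R -> R) : Prop :=
  (forall x, 0 <= f x) /\
  is_RInt_gen f (Rbar_locally m_infty) (Rbar_locally p_infty) 1.

(* Main.v *)
Require Import Defs.
From Stdlib Require Import Reals Lra Psatz.
From Coquelicot Require Import Coquelicot.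
Open Scope R_scope.

Lemma PI_gt3 : 3 < PI.
Proof. pose proof PI2_3_2; lra. Qed.

Lemma abs_sin_le u : Rabs (sin u) <= Rabs u.
Proof.
  assert (H : forall u, 0 < u -> Rabs (sin u) <= u).
  { intros v Hv. pose proof (sin_lt_x v Hv). pose proof (SIN_bound v).
    apply Rabs_le. split; [|lra].
    destruct (Rle_lt_dec 1 v). lra.
    pose proof PI_gt3. assert (0 <= sin v) by (apply sin_ge_0; lra). lra. }
  destruct (Rtotal_order u 0) as [Hu|[Hu|Hu]].
  - rewrite <- (Ropp_involutive u), sin_neg, Rabs_Ropp, (Rabs_Ropp (- u)).
    rewrite (Rabs_right (-u)) by lra. apply H; lra.
  - subst. rewrite sin_0. lra.
  - rewrite (Rabs_right u) by lra. apply H; lra.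
Qed.

Definition gfun (lam tau mu t : R) : R :=
  if Rlt_dec t (- (2 * tau)) then 0
  else if Rle_dec t (- tau) then - (2 * (1 - lam) / lam * sin (tau * mu) * ((2 * tau - - t) / tau))
  else if Rlt_dec t tau then 2 * (1 - lam) / lam * sin (t * mu)
  else if Rle_dec t (2 * tau) then 2 * (1 - lam) / lam * sin (tau * mu) * ((2 * tau - t) / tau)
  else 0.

Lemma hfun_eq lam tau mu t : hfun lam tau mu t = (0, gfun lam tau mu t).
Proof.
  unfold hfun, gfun, kfun, jfun, Copp, Cmult, RtoC.
  destruct Rlt_dec; [reflexivity|].
  destruct Rle_dec; [simpl; f_equal; ring|].
  destruct Rlt_dec; [simpl; f_equal; ring|].
  destruct Rle_dec; [simpl; f_equal; ring|reflexivity].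
Qed.

Lemma integrand_eq x t g :
  Cmult (cexp (0, - (t * x))) (0, g) = (sin (t * x) * g, cos (t * x) * g).
Proof.
  unfold cexp, Cmult; simpl. rewrite exp_0, sin_neg, cos_neg. f_equal; ring.
Qed.

Lemma gfun_odd lam tau mu t : 0 < tau -> gfun lam tau mu (- t) = - gfun lam tau mu t.
Proof.
  intro Ht. unfold gfun.
  repeat (destruct Rlt_dec || destruct Rle_dec); try lra;
  try (rewrite ?Ropp_mult_distr_l_reverse, ?sin_neg; ring_simplify; try ring);
  try (replace t with (-tau) by lra; field; lra);
  try (replace t with (tau) by lra; field; lra);
  try (replace t with (2*tau) by lra; field; lra);
  try (replace t with (-(2*tau)) by lra; field; lra).
Qed.

Lemma cont_mult_R (f g : R -> R) x : continuous f x -> continuous g x -> continuous (fun y => f y * g y) x.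
Proof. intros; apply (@continuous_mult R_UniformSpace R_AbsRing f g x); auto. Qed.

Lemma cont_der (f : R -> R) x : ex_derive f x -> continuous f x.
Proof. intros; apply (@ex_derive_continuous R_AbsRing R_NormedModule); auto. Qed.

Lemma is_RInt_zero {V : NormedModule R_AbsRing} a b : is_RInt (fun _ => @zero V) a b zero.
Proof.
  pose proof (is_RInt_const a b (@zero V)) as K.
  assert (E : scal (b - a) (@zero V) = @zero V).
  exact (@scal_zero_r R_Ring (NormedModule.ModuleSpace R_AbsRing V) (b-a)).
  rewrite E in K. exact K.
Qed.

Lemma is_RInt_gen_support {V : NormedModule R_AbsRing} (f : R -> V) a b l :
  (forall t, t < a \/ b < t -> f t = zero) -> is_RInt f a b l ->
  is_RInt_gen f (Rbar_locally m_infty) (Rbar_locally p_infty) l.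
Proof.
  intros Hz Hab P HP. simpl in HP.
  apply (Filter_prod _ _ _ (fun a' => a' < a) (fun b' => b < b')).
  - exists a. auto.
  - exists b. auto.
  - intros a' b' Ha Hb. exists l. split; [|apply locally_singleton; exact HP].
    simpl.
    assert (H1 : is_RInt f a' a zero).
    { apply is_RInt_ext with (fun _ => zero).
      intros t Ht. rewrite Rmin_left, Rmax_right in Ht by lra. rewrite Hz by (left; lra); reflexivity.
      apply is_RInt_zero. }
    assert (H2 : is_RInt f b b' zero).
    { apply is_RInt_ext with (fun _ => zero).
      intros t Ht. rewrite Rmin_left, Rmax_right in Ht by lra. rewrite Hz by (right; lra); reflexivity.
      apply is_RInt_zero. }
    pose proof (is_RInt_Chasles f a b b' l zero Hab H2) as K1.
    pose proof (is_RInt_Chasles f a' a b' zero _ H1 K1) as K2.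
    rewrite plus_zero_r, plus_zero_l in K2. exact K2.
Qed.

Lemma odd_int_zero (f : R -> R) a I :
  (forall y, f (- y) = - f y) -> is_RInt f (- a) a I -> I = 0.
Proof.
  intros Ho H.
  assert (H0 : is_RInt f (- a) (- - a) I) by (rewrite Ropp_involutive; exact H).
  pose proof (@is_RInt_comp_opp R_NormedModule f a (- a) I H0) as H1.
  assert (H2 : is_RInt f a (- a) I).
  { apply is_RInt_ext with (2 := H1). intros y _. rewrite Ho. unfold opp; simpl. ring. }
  pose proof (@is_RInt_swap R_NormedModule f a (-a) I H) as H3.
  apply (@is_RInt_unique R_CompleteNormedModule) in H3. apply (@is_RInt_unique R_CompleteNormedModule) in H2. rewrite H3 in H2.
  change (- I = I) in H2. lra.
Qed.

Lemma ex_RInt_phi_g (phi : R -> R) lam tau mu :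
  0 < tau -> (forall t, continuous phi t) ->
  ex_RInt (fun t => phi t * gfun lam tau mu t) (- (2 * tau)) (2 * tau).
Proof.
  intros Ht Hc.
  apply ex_RInt_Chasles with (- tau).
  - apply ex_RInt_ext with (fun t => phi t * (- (2 * (1 - lam) / lam * sin (tau * mu) * ((2 * tau - - t) / tau)))).
    + intros t H. rewrite Rmin_left in H by lra. rewrite Rmax_right in H by lra.
      unfold gfun. destruct Rlt_dec; [lra|]. destruct Rle_dec; [reflexivity|lra].
    + apply (@ex_RInt_continuous R_CompleteNormedModule). intros z _. apply cont_mult_R. apply Hc.
      apply cont_der. auto_derive. lra.
  - apply ex_RInt_Chasles with tau.
    + apply ex_RInt_ext with (fun t => phi t * (2 * (1 - lam) / lam * sin (t * mu))).
      * intros t H. rewrite Rmin_left in H by lra. rewrite Rmax_right in H by lra.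
        unfold gfun. destruct Rlt_dec; [lra|]. destruct Rle_dec; [lra|]. destruct Rlt_dec; [reflexivity|lra].
      * apply (@ex_RInt_continuous R_CompleteNormedModule). intros z _. apply cont_mult_R. apply Hc.
        apply cont_der. auto_derive. auto.
    + apply ex_RInt_ext with (fun t => phi t * (2 * (1 - lam) / lam * sin (tau * mu) * ((2 * tau - t) / tau))).
      * intros t H. rewrite Rmin_left in H by lra. rewrite Rmax_right in H by lra.
        unfold gfun. destruct Rlt_dec; [lra|]. destruct Rle_dec; [lra|]. destruct Rlt_dec; [lra|].
        destruct Rle_dec; [reflexivity|lra].
      * apply (@ex_RInt_continuous R_CompleteNormedModule). intros z _. apply cont_mult_R. apply Hc.
        apply cont_der. auto_derive. lra.
Qed.

Definition GS lam tau mu x := RInt (fun t => sin (t * x) * gfun lam tau mu t) (- (2 * tau)) (2 * tau).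

Lemma cont_sin_lin x t : continuous (fun t => sin (t * x)) t.
Proof. apply cont_der. auto_derive. auto. Qed.
Lemma cont_cos_lin x t : continuous (fun t => cos (t * x)) t.
Proof. apply cont_der. auto_derive. auto. Qed.

Lemma fourier_eq lam tau mu x : 0 < tau ->
  fourier (hfun lam tau mu) x = (GS lam tau mu x, 0).
Proof.
  intros Ht. unfold fourier.
  apply (@is_RInt_gen_unique C_R_CompleteNormedModule _ _ (Proper_StrongProper _ (Rbar_locally_filter _)) (Proper_StrongProper _ (Rbar_locally_filter _))).
  apply (@is_RInt_gen_support C_R_NormedModule _ (- (2 * tau)) (2 * tau)).
  - intros t Ht'. rewrite hfun_eq. unfold gfun.
    destruct Rlt_dec. rewrite integrand_eq, !Rmult_0_r; reflexivity.
    destruct Rle_dec. lra. destruct Rlt_dec. lra. destruct Rle_dec. lra.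
    rewrite integrand_eq, !Rmult_0_r; reflexivity.
  - apply is_RInt_ext with (fun t => (sin (t * x) * gfun lam tau mu t, cos (t * x) * gfun lam tau mu t)).
    { intros t _. rewrite hfun_eq, integrand_eq. reflexivity. }
    apply (is_RInt_fct_extend_pair (U := R_NormedModule) (V := R_NormedModule)); simpl.
    + apply (@RInt_correct R_CompleteNormedModule). apply ex_RInt_phi_g; auto. apply cont_sin_lin.
    + assert (Hc := ex_RInt_phi_g (fun t => cos (t * x)) lam tau mu Ht (cont_cos_lin x)).
      apply (@RInt_correct R_CompleteNormedModule) in Hc.
      assert (E : RInt (fun t => cos (t * x) * gfun lam tau mu t) (- (2 * tau)) (2 * tau) = 0).
      { apply (odd_int_zero (fun t => cos (t * x) * gfun lam tau mu t) (2 * tau)); auto.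
        intros y. rewrite gfun_odd by auto. rewrite Ropp_mult_distr_l_reverse, cos_neg. ring. }
      rewrite E in Hc. exact Hc.
Qed.

Lemma Atmu lam tau mu : 0 < lam -> 0 < tau -> mu = 1/100 * lam / tau ->
  2 * (1 - lam) / lam * (tau * mu) = 2 * (1 - lam) / 100.
Proof. intros Hl Ht ->. field. lra. Qed.

Lemma gbound lam tau mu t : 0 < lam <= 1/2 -> 0 < tau -> mu = 1/100 * lam / tau ->
  Rabs (gfun lam tau mu t) <= 1/50.
Proof.
  intros Hl Ht Hmu.
  pose proof (Atmu lam tau mu ltac:(lra) Ht Hmu) as EA.
  assert (HA : 0 < 2 * (1 - lam) / lam) by (apply Rdiv_lt_0_compat; lra).
  assert (Hm : 0 < mu) by (rewrite Hmu; apply Rdiv_lt_0_compat; lra).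
  assert (Hs : Rabs (sin (tau * mu)) <= tau * mu).
  { pose proof (abs_sin_le (tau * mu)). rewrite (Rabs_right (tau * mu)) in H; [lra|]. apply Rle_ge, Rmult_le_pos; lra. }
  assert (Hsb : Rabs (2 * (1 - lam) / lam * sin (tau * mu)) <= 1/50).
  { rewrite Rabs_mult, (Rabs_right (2 * (1 - lam) / lam)) by lra.
    apply Rle_trans with (2 * (1 - lam) / lam * (tau * mu)).
    apply Rmult_le_compat_l; lra. lra. }
  unfold gfun.
  destruct Rlt_dec. rewrite Rabs_R0; lra.
  destruct Rle_dec.
  { rewrite Rabs_Ropp, Rabs_mult.
    assert (0 <= (2 * tau - - t) / tau <= 1).
    { split. apply Rdiv_le_0_compat; lra. apply Rmult_le_reg_r with tau; auto.
      unfold Rdiv; rewrite Rmult_assoc, Rinv_l; lra. }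
    rewrite (Rabs_right ((2 * tau - - t) / tau)) by lra.
    apply Rle_trans with (Rabs (2 * (1 - lam) / lam * sin (tau * mu)) * 1); [|lra].
    apply Rmult_le_compat_l. apply Rabs_pos. lra. }
  destruct Rlt_dec.
  { rewrite Rabs_mult, (Rabs_right (2 * (1 - lam) / lam)) by lra.
    apply Rle_trans with (2 * (1 - lam) / lam * (tau * mu)); [|lra].
    apply Rmult_le_compat_l; [lra|]. eapply Rle_trans. apply abs_sin_le.
    rewrite Rabs_mult, (Rabs_right mu) by lra. apply Rmult_le_compat_r. lra.
    apply Rabs_le; lra. }
  destruct Rle_dec.
  { rewrite Rabs_mult.
    assert (0 <= (2 * tau - t) / tau <= 1).
    { split. apply Rdiv_le_0_compat; lra. apply Rmult_le_reg_r with tau; auto.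
      unfold Rdiv; rewrite Rmult_assoc, Rinv_l; lra. }
    rewrite (Rabs_right ((2 * tau - t) / tau)) by lra.
    apply Rle_trans with (Rabs (2 * (1 - lam) / lam * sin (tau * mu)) * 1); [|lra].
    apply Rmult_le_compat_l. apply Rabs_pos. lra. }
  rewrite Rabs_R0; lra.
Qed.

Lemma norm_R (x : R) : norm x = Rabs x.
Proof. reflexivity. Qed.

Lemma ex_GS lam tau mu x : 0 < tau ->
  ex_RInt (fun t => sin (t * x) * gfun lam tau mu t) (- (2 * tau)) (2 * tau).
Proof. intros Ht. apply (ex_RInt_phi_g (fun t => sin (t * x))); auto. apply cont_sin_lin. Qed.

Lemma GS_small lam tau mu x : 0 < lam <= 1/2 -> 0 < tau -> mu = 1/100 * lam / tau ->
  Rabs (GS lam tau mu x) <= 4 * tau * (1/50).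
Proof.
  intros Hl Ht Hmu.
  pose proof (@norm_RInt_le_const R_NormedModule (fun t => sin (t * x) * gfun lam tau mu t)
    (- (2 * tau)) (2 * tau) (GS lam tau mu x) (1/50)) as K.
  rewrite norm_R in K. replace (4 * tau) with (2 * tau - - (2 * tau)) by ring.
  apply K. lra.
  - intros t _. rewrite norm_R, Rabs_mult.
    pose proof (SIN_bound (t * x)). pose proof (gbound lam tau mu t Hl Ht Hmu).
    assert (Rabs (sin (t * x)) <= 1) by (apply Rabs_le; lra).
    apply Rle_trans with (1 * (1/50)); [|lra].
    apply Rmult_le_compat; auto using Rabs_pos.
  - apply (@RInt_correct R_CompleteNormedModule). apply ex_GS; auto.
Qed.

Lemma GS_odd lam tau mu x : 0 < tau -> GS lam tau mu (- x) = - GS lam tau mu x.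
Proof.
  intros Ht. unfold GS.
  rewrite <- (@RInt_opp R_CompleteNormedModule) by (apply ex_GS; auto).
  apply RInt_ext. intros t _. unfold opp; simpl.
  replace (t * - x) with (- (t * x)) by ring. rewrite sin_neg. ring.
Qed.

Lemma sin_lip a b : Rabs (sin a - sin b) <= Rabs (a - b).
Proof.
  rewrite form4, !Rabs_mult.
  pose proof (COS_bound ((a + b) / 2)). pose proof (abs_sin_le ((a - b) / 2)).
  assert (Rabs (cos ((a + b) / 2)) <= 1) by (apply Rabs_le; lra).
  rewrite Rabs_right by lra.
  replace (Rabs (a - b)) with (2 * 1 * Rabs ((a - b) / 2)).
  apply Rmult_le_compat; try lra; auto using Rabs_pos. apply Rmult_le_pos; auto using Rabs_pos; lra.
  unfold Rdiv. rewrite Rabs_mult, (Rabs_right (/2)) by lra. field.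
Qed.

Lemma GS_lip lam tau mu x y : 0 < lam <= 1/2 -> 0 < tau -> mu = 1/100 * lam / tau ->
  Rabs (GS lam tau mu x - GS lam tau mu y) <= 4 * tau * (2 * tau * Rabs (x - y) * (1/50)).
Proof.
  intros Hl Ht Hmu.
  assert (E : GS lam tau mu x - GS lam tau mu y =
     RInt (fun t => (sin (t * x) - sin (t * y)) * gfun lam tau mu t) (- (2 * tau)) (2 * tau)).
  { unfold GS. rewrite <- (@RInt_minus R_CompleteNormedModule) by (apply ex_GS; auto).
    apply RInt_ext. intros t _. unfold minus, plus, opp; simpl. ring. }
  rewrite E.
  pose proof (@norm_RInt_le_const R_NormedModule (fun t => (sin (t * x) - sin (t * y)) * gfun lam tau mu t)
    (- (2 * tau)) (2 * tau) (RInt (fun t => (sin (t * x) - sin (t * y)) * gfun lam tau mu t) (- (2 * tau)) (2 * tau)) (2 * tau * Rabs (x - y) * (1/50))) as K.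
  rewrite norm_R in K. replace (4 * tau) with (2 * tau - - (2 * tau)) by ring.
  apply K. lra.
  - intros t Ht'. rewrite norm_R, Rabs_mult.
    pose proof (gbound lam tau mu t Hl Ht Hmu).
    apply Rmult_le_compat; auto using Rabs_pos.
    eapply Rle_trans. apply sin_lip.
    replace (t * x - t * y) with (t * (x - y)) by ring. rewrite Rabs_mult.
    apply Rmult_le_compat_r. apply Rabs_pos. apply Rabs_le; lra.
  - apply (@RInt_correct R_CompleteNormedModule).
    apply (ex_RInt_phi_g (fun t => sin (t * x) - sin (t * y))); auto.
    intros t. apply (@continuous_minus R_UniformSpace R_AbsRing R_NormedModule); apply cont_sin_lin.
Qed.

Lemma is_RInt_der_R (F f : R -> R) a b :
  (forall t, Rmin a b <= t <= Rmax a b -> is_derive F t (f t)) ->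
  (forall t, Rmin a b <= t <= Rmax a b -> continuous f t) ->
  is_RInt f a b (F b - F a).
Proof. intros H1 H2. apply (@is_RInt_derive R_CompleteNormedModule); auto. Qed.

Lemma sin_negm a b : sin (- a * b) = - sin (a * b).
Proof. rewrite <- sin_neg. f_equal. ring. Qed.
Lemma cos_negm a b : cos (- a * b) = cos (a * b).
Proof. rewrite <- cos_neg. f_equal. ring. Qed.


Definition Fmid (lam tau mu x t : R) := 2 * (1 - lam) / lam * ((mu * sin (t * x) * cos (t * mu) - x * cos (t * x) * sin (t * mu)) / (x ^ 2 - mu ^ 2)).
Definition Fright (lam tau mu x t : R) := 2 * (1 - lam) / lam * sin (tau * mu) / tau * (- (2 * tau - t) * cos (t * x) / x - sin (t * x) / x ^ 2).
Definition Fleft (lam tau mu x t : R) := - (2 * (1 - lam) / lam * sin (tau * mu) / tau) * (- (2 * tau + t) * cos (t * x) / x + sin (t * x) / x ^ 2).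

Lemma piece_left lam tau mu x (Hl : 0 < lam <= 1/2) (Ht : 0 < tau) (Hx : x <> 0) (Hxm : x ^ 2 - mu ^ 2 <> 0) : is_RInt (fun t => sin (t * x) * gfun lam tau mu t) (- (2 * tau)) (- tau)
   (Fleft lam tau mu x (- tau) - Fleft lam tau mu x (- (2 * tau))).
Proof.
  apply is_RInt_ext with (fun t => sin (t * x) * (- (2 * (1 - lam) / lam * sin (tau * mu) * ((2 * tau - - t) / tau)))).
  - intros t H. rewrite Rmin_left in H by lra. rewrite Rmax_right in H by lra.
    unfold gfun. destruct Rlt_dec; [lra|]. destruct Rle_dec; [reflexivity|lra].
  - apply is_RInt_der_R.
    + intros t _. unfold Fleft. auto_derive; [auto|]. field. split; lra.
    + intros t _. apply cont_der. auto_derive. lra.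
Qed.

Lemma piece_mid lam tau mu x (Hl : 0 < lam <= 1/2) (Ht : 0 < tau) (Hx : x <> 0) (Hxm : x ^ 2 - mu ^ 2 <> 0) : is_RInt (fun t => sin (t * x) * gfun lam tau mu t) (- tau) tau
   (Fmid lam tau mu x tau - Fmid lam tau mu x (- tau)).
Proof.
  apply is_RInt_ext with (fun t => sin (t * x) * (2 * (1 - lam) / lam * sin (t * mu))).
  - intros t H. rewrite Rmin_left in H by lra. rewrite Rmax_right in H by lra.
    unfold gfun. destruct Rlt_dec; [lra|]. destruct Rle_dec; [lra|]. destruct Rlt_dec; [reflexivity|lra].
  - apply is_RInt_der_R.
    + intros t _. unfold Fmid. auto_derive; [auto|]. field. split; lra.
    + intros t _. apply cont_der. auto_derive. lra.
Qed.

Lemma piece_right lam tau mu x (Hl : 0 < lam <= 1/2) (Ht : 0 < tau) (Hx : x <> 0) (Hxm : x ^ 2 - mu ^ 2 <> 0) : is_RInt (fun t => sin (t * x) * gfun lam tau mu t) tau (2 * tau)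
   (Fright lam tau mu x (2 * tau) - Fright lam tau mu x tau).
Proof.
  apply is_RInt_ext with (fun t => sin (t * x) * (2 * (1 - lam) / lam * sin (tau * mu) * ((2 * tau - t) / tau))).
  - intros t H. rewrite Rmin_left in H by lra. rewrite Rmax_right in H by lra.
    unfold gfun. destruct Rlt_dec; [lra|]. destruct Rle_dec; [lra|]. destruct Rlt_dec; [lra|].
    destruct Rle_dec; [reflexivity|lra].
  - apply is_RInt_der_R.
    + intros t _. unfold Fright. auto_derive; [auto|]. field. split; lra.
    + intros t _. apply cont_der. auto_derive. lra.
Qed.

Lemma GS_closed lam tau mu x (Hl : 0 < lam <= 1/2) (Ht : 0 < tau) (Hx : x <> 0) (Hxm : x ^ 2 - mu ^ 2 <> 0) : GS lam tau mu x =
  2 * (2 * (1 - lam) / lam) * mu * sin (tau * x) * cos (tau * mu) / (x ^ 2 - mu ^ 2)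
  - 2 * (2 * (1 - lam) / lam) * sin (tau * mu) * mu ^ 2 * cos (tau * x) / (x * (x ^ 2 - mu ^ 2))
  + 2 * (2 * (1 - lam) / lam) * sin (tau * mu) * (sin (tau * x) - sin (2 * tau * x)) / (tau * x ^ 2).
Proof.
  unfold GS.
  pose proof (is_RInt_Chasles _ _ _ _ _ _ (piece_left lam tau mu x Hl Ht Hx Hxm) (is_RInt_Chasles _ _ _ _ _ _ (piece_mid lam tau mu x Hl Ht Hx Hxm) (piece_right lam tau mu x Hl Ht Hx Hxm))) as K.
  apply (@is_RInt_unique R_CompleteNormedModule) in K. rewrite K.
  unfold plus; simpl. unfold Fleft, Fmid, Fright.
  rewrite !sin_negm, !cos_negm.
  field. repeat split; lra.
Qed.


Lemma abs_prod_le p q P Q : Rabs p <= P -> Rabs q <= Q -> Rabs (p * q) <= P * Q.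
Proof.
  intros H1 H2. rewrite Rabs_mult. apply Rmult_le_compat; auto using Rabs_pos.
Qed.

Lemma GS_large lam tau mu x : 0 < lam <= 1/2 -> 0 < tau -> mu = 1/100 * lam / tau ->
  / tau < Rabs x -> Rabs (GS lam tau mu x) * (tau * x ^ 2) <= 3 / 2.
Proof.
  intros Hl Ht Hmu Hx.
  assert (Hm : 0 < mu) by (rewrite Hmu; apply Rdiv_lt_0_compat; lra).
  assert (Htm : tau * mu = lam / 100) by (rewrite Hmu; field; lra).
  assert (Hax : 1 < tau * Rabs x).
  { apply Rmult_lt_compat_l with (r := tau) in Hx; auto. rewrite Rinv_r in Hx; lra. }
  assert (Hx0 : x <> 0). { intro E; subst. rewrite Rabs_R0 in Hax; lra. }
  assert (Hxx : x ^ 2 = Rabs x * Rabs x) by (rewrite <- Rabs_mult, Rabs_right; [ring| nra]).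
  assert (Hmx : mu * 200 <= Rabs x).
  { apply Rmult_le_reg_l with tau; auto. nra. }
  set (K := x ^ 2 - mu ^ 2).
  assert (HK : x ^ 2 <= 2 * K). { unfold K. rewrite Hxx. nra. }
  assert (HK0 : 0 < K). { unfold K. rewrite Hxx. pose proof (Rabs_pos x). nra. }
  pose proof (Atmu lam tau mu ltac:(lra) Ht Hmu) as EA.
  set (A := 2 * (1 - lam) / lam) in *.
  assert (HA : 0 < A) by (unfold A; apply Rdiv_lt_0_compat; lra).
  assert (Hs : Rabs (sin (tau * mu)) <= tau * mu).
  { pose proof (abs_sin_le (tau * mu)). rewrite (Rabs_right (tau * mu)) in H; [lra|]. apply Rle_ge, Rmult_le_pos; lra. }
  assert (HAs : Rabs (A * sin (tau * mu)) <= 1/50).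
  { rewrite Rabs_mult, (Rabs_right A) by lra.
    apply Rle_trans with (A * (tau * mu)). apply Rmult_le_compat_l; lra. lra. }
  assert (HAm : Rabs (A * mu * tau) <= 1/50).
  { rewrite Rabs_right. replace (A * mu * tau) with (A * (tau * mu)) by ring. lra.
    apply Rle_ge. apply Rmult_le_pos; [|lra]. apply Rmult_le_pos; lra. }
  assert (HB1 : Rabs (x ^ 2 / K) <= 2).
  { rewrite Rabs_right. apply Rmult_le_reg_r with K; auto. unfold Rdiv. rewrite Rmult_assoc, Rinv_l; lra.
    apply Rle_ge, Rdiv_le_0_compat; nra. }
  assert (HB2 : Rabs (mu ^ 2 * tau * x / K) <= 1/100).
  { unfold Rdiv. rewrite Rabs_mult, Rabs_mult, (Rabs_right (/ K)) by (apply Rle_ge, Rlt_le, Rinv_0_lt_compat; auto).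
    rewrite (Rabs_right (mu ^ 2 * tau)) by (apply Rle_ge; apply Rmult_le_pos; nra).
    apply Rmult_le_reg_r with K; auto. rewrite Rmult_assoc, Rinv_l by lra.
    assert (mu * Rabs x <= x ^ 2) by (rewrite Hxx; nra).
    assert (tau * mu <= 1/200) by lra.
    assert (mu ^ 2 * tau * Rabs x = (tau * mu) * (mu * Rabs x)) by ring.
    nra. }
  pose proof (SIN_bound (tau * x)). pose proof (COS_bound (tau * x)).
  pose proof (SIN_bound (2 * tau * x)). pose proof (COS_bound (tau * mu)).
  assert (E : GS lam tau mu x * (tau * x ^ 2) =
     2 * (A * mu * tau) * (sin (tau * x) * cos (tau * mu)) * (x ^ 2 / K)
     - 2 * (A * sin (tau * mu)) * (cos (tau * x) * (mu ^ 2 * tau * x / K))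
     + 2 * (A * sin (tau * mu)) * (sin (tau * x) - sin (2 * tau * x))).
  { rewrite (GS_closed lam tau mu x Hl Ht Hx0) by (unfold K in HK0; lra). unfold K, A. assert (lam <> 0) by lra. assert (tau <> 0) by lra. assert (x ^ 2 - mu ^ 2 <> 0) by (unfold K in HK0; lra). field. repeat split; auto. }
  rewrite <- (Rabs_right (tau * x ^ 2)) by (apply Rle_ge, Rmult_le_pos; nra).
  rewrite <- Rabs_mult, E.
  assert (R1 : Rabs (2 * (A * mu * tau) * (sin (tau * x) * cos (tau * mu)) * (x ^ 2 / K)) <= 2 * (1/50) * 1 * 2).
  { apply abs_prod_le; auto. apply abs_prod_le. apply abs_prod_le; auto. rewrite Rabs_right; lra.
    apply Rle_trans with (1 * 1); [|lra]. apply abs_prod_le; apply Rabs_le; lra. }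
  assert (R2 : Rabs (2 * (A * sin (tau * mu)) * (cos (tau * x) * (mu ^ 2 * tau * x / K))) <= 2 * (1/50) * (1 * (1/100))).
  { apply abs_prod_le. apply abs_prod_le; auto. rewrite Rabs_right; lra.
    apply abs_prod_le; auto. apply Rabs_le; lra. }
  assert (R3 : Rabs (2 * (A * sin (tau * mu)) * (sin (tau * x) - sin (2 * tau * x))) <= 2 * (1/50) * 2).
  { apply abs_prod_le. apply abs_prod_le; auto. rewrite Rabs_right; lra. apply Rabs_le; lra. }
  unfold Rminus at 1.
  eapply Rle_trans. apply Rabs_triang.
  eapply Rle_trans. apply Rplus_le_compat_r. apply Rabs_triang.
  rewrite Rabs_Ropp. lra.
Qed.

Lemma tail_bound (f : R -> R) R0 M :
  (forall x, continuous f x) -> 0 < R0 -> 0 <= M ->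
  (forall x, R0 <= Rabs x -> Rabs (f x) <= M / x ^ 2) ->
  forall R b, R0 <= R -> R <= b -> Rabs (RInt f R b) <= M / R.
Proof.
  intros Hc HR0 HM Hb R b HR Hrb.
  assert (Hex : ex_RInt f R b) by (apply (@ex_RInt_continuous R_CompleteNormedModule); auto).
  assert (HI : is_RInt (fun t => M / t ^ 2) R b ((- M / b) - (- M / R))).
  { apply (is_RInt_der_R (fun t => - M / t)).
    - intros t Ht. rewrite Rmin_left, Rmax_right in Ht by lra.
      auto_derive. lra. field. lra.
    - intros t Ht. rewrite Rmin_left, Rmax_right in Ht by lra.
      apply cont_der. auto_derive. nra. }
  eapply Rle_trans. apply abs_RInt_le; auto.
  eapply Rle_trans. apply RInt_le with (g := fun t => M / t ^ 2); auto.
  - apply (@ex_RInt_continuous R_CompleteNormedModule). intros z _.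
    apply continuous_Rabs_comp. auto.
  - eexists; exact HI.
  - intros t Ht. apply Hb. rewrite Rabs_right; lra.
  - apply (@is_RInt_unique R_CompleteNormedModule) in HI. rewrite HI.
    assert (0 <= M / b) by (apply Rdiv_le_0_compat; lra). unfold Rdiv in *. lra.
Qed.

Lemma odd_RInt_sym (f : R -> R) a b :
  (forall y, f (- y) = - f y) -> (forall x, continuous f x) ->
  RInt f a b = RInt f (- a) (- b).
Proof.
  intros Ho Hc.
  assert (H : is_RInt f (- a) (- b) (RInt f (- a) (- b))).
  { apply (@RInt_correct R_CompleteNormedModule). apply (@ex_RInt_continuous R_CompleteNormedModule); auto. }
  pose proof (@is_RInt_comp_opp R_NormedModule f a b _ H) as H1.
  apply (@is_RInt_unique R_CompleteNormedModule).
  apply is_RInt_ext with (2 := H1). intros y _. rewrite Ho. unfold opp; simpl. ring.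
Qed.

Lemma decay_int (f : R -> R) R0 M :
  (forall x, continuous f x) -> (forall y, f (- y) = - f y) -> 0 < R0 -> 0 <= M ->
  (forall x, R0 <= Rabs x -> Rabs (f x) <= M / x ^ 2) ->
  is_RInt_gen f (Rbar_locally m_infty) (Rbar_locally p_infty) 0.
Proof.
  intros Hc Ho HR0 HM Hb P [eps HP].
  set (R := Rmax R0 (2 * M / eps) + 1).
  assert (HR1 : R0 <= R) by (unfold R; pose proof (Rmax_l R0 (2 * M / eps)); lra).
  assert (HR2 : 2 * M / eps < R) by (unfold R; pose proof (Rmax_r R0 (2 * M / eps)); lra).
  assert (Heps := cond_pos eps).
  assert (HR3 : 2 * M < eps * R).
  { apply Rmult_lt_compat_l with (r := eps) in HR2; auto. unfold Rdiv in HR2.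
    replace (eps * (2 * M * / eps)) with (2 * M) in HR2 by (field; lra). lra. }
  apply (Filter_prod _ _ _ (fun a => a < - R) (fun b => R < b)).
  - exists (- R). auto.
  - exists R. auto.
  - intros a b Ha Hb'. simpl.
    assert (Hex : forall u v, ex_RInt f u v) by (intros; apply (@ex_RInt_continuous R_CompleteNormedModule); auto).
    exists (RInt f a b). split.
    apply (@RInt_correct R_CompleteNormedModule); auto.
    apply HP. change (Rabs (RInt f a b - 0) < eps). rewrite Rminus_0_r.
    rewrite <- (@RInt_Chasles R_CompleteNormedModule f a (- R) b) by auto.
    rewrite <- (@RInt_Chasles R_CompleteNormedModule f (- R) R b) by auto.
    assert (Hz : RInt f (- R) R = 0).
    { apply (odd_int_zero f R); auto. apply (@RInt_correct R_CompleteNormedModule); auto. }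
    change (Rabs (RInt f a (- R) + (RInt f (- R) R + RInt f R b)) < eps).
    rewrite Hz, Rplus_0_l.
    rewrite (odd_RInt_sym f a (- R)) by auto. rewrite Ropp_involutive.
    pose proof (tail_bound f R0 M Hc HR0 HM Hb R b HR1 ltac:(lra)) as T1.
    pose proof (tail_bound f R0 M Hc HR0 HM Hb R (- a) HR1 ltac:(lra)) as T2.
    assert (E : RInt f (- a) R = - RInt f R (- a)).
    { rewrite <- (@opp_RInt_swap R_CompleteNormedModule) by auto. reflexivity. }
    rewrite E.
    eapply Rle_lt_trans. apply Rabs_triang. rewrite Rabs_Ropp.
    assert (M / R + M / R < eps).
    { apply Rmult_lt_reg_r with R. lra. field_simplify; lra. }
    lra.
Qed.

Lemma nz4 tau t : 0 < tau -> t <> 0 -> 4 * tau * (t * (t * 1)) <> 0.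
Proof. intros H1 H2. repeat apply Rmult_integral_contrapositive_currified; lra. Qed.

Lemma p0_left tau a : 0 < tau -> a <= - / tau ->
  is_RInt (p0F tau) a (- / tau) ((- / (4 * tau * (- / tau))) - (- / (4 * tau * a))).
Proof.
  intros Ht Ha. assert (0 < / tau) by (apply Rinv_0_lt_compat; lra).
  apply is_RInt_ext with (fun t => / (4 * tau * t ^ 2)).
  - intros t Hq. rewrite Rmin_left, Rmax_right in Hq by lra. unfold p0F.
    destruct Rle_dec as [r|]; [|reflexivity]. rewrite Rabs_left in r by lra. lra.
  - apply (is_RInt_der_R (fun t => - / (4 * tau * t))).
    + intros t Hq. rewrite Rmin_left, Rmax_right in Hq by lra.
      auto_derive. nra. field. nra.
    + intros t Hq. rewrite Rmin_left, Rmax_right in Hq by lra.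
      apply cont_der. auto_derive. apply nz4; lra.
Qed.

Lemma p0_right tau b : 0 < tau -> / tau <= b ->
  is_RInt (p0F tau) (/ tau) b ((- / (4 * tau * b)) - (- / (4 * tau * (/ tau)))).
Proof.
  intros Ht Ha. assert (0 < / tau) by (apply Rinv_0_lt_compat; lra).
  apply is_RInt_ext with (fun t => / (4 * tau * t ^ 2)).
  - intros t Hq. rewrite Rmin_left, Rmax_right in Hq by lra. unfold p0F.
    destruct Rle_dec as [r|]; [|reflexivity]. rewrite Rabs_right in r by lra. lra.
  - apply (is_RInt_der_R (fun t => - / (4 * tau * t))).
    + intros t Hq. rewrite Rmin_left, Rmax_right in Hq by lra.
      auto_derive. nra. field. nra.
    + intros t Hq. rewrite Rmin_left, Rmax_right in Hq by lra.
      apply cont_der. auto_derive. apply nz4; lra.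
Qed.

Lemma p0_mid tau : 0 < tau -> is_RInt (p0F tau) (- / tau) (/ tau) (1 / 2).
Proof.
  intros Ht. assert (0 < / tau) by (apply Rinv_0_lt_compat; lra).
  apply is_RInt_ext with (fun _ => tau / 4).
  - intros t Hq. rewrite Rmin_left, Rmax_right in Hq by lra. unfold p0F.
    destruct Rle_dec as [r|n]; [reflexivity|]. exfalso; apply n. apply Rabs_le; lra.
  - replace (1 / 2) with (scal (/ tau - - / tau) (tau / 4)).
    apply (@is_RInt_const R_NormedModule).
    unfold scal; simpl. unfold mult; simpl. field. lra.
Qed.

Lemma p0_int tau : 0 < tau -> is_RInt_gen (p0F tau) (Rbar_locally m_infty) (Rbar_locally p_infty) 1.
Proof.
  intros Ht P [eps HP].
  assert (Hi : 0 < / tau) by (apply Rinv_0_lt_compat; lra).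
  assert (Heps := cond_pos eps).
  set (R := / tau + / (tau * eps) + 1).
  assert (HR1 : 0 < / (tau * eps)) by (apply Rinv_0_lt_compat; nra).
  apply (Filter_prod _ _ _ (fun a => a < - R) (fun b => R < b)).
  - exists (- R). auto.
  - exists R. auto.
  - intros a b Ha Hb. simpl.
    exists (1 + / (4 * tau * a) - / (4 * tau * b)). split.
    + pose proof (is_RInt_Chasles _ _ _ _ _ _ (p0_left tau a Ht ltac:(unfold R in Ha; lra))
        (is_RInt_Chasles _ _ _ _ _ _ (p0_mid tau Ht) (p0_right tau b Ht ltac:(unfold R in Hb; lra)))) as K.
      replace (1 + / (4 * tau * a) - / (4 * tau * b)) with
        (plus (- / (4 * tau * - / tau) - - / (4 * tau * a))
         (plus (1 / 2) (- / (4 * tau * b) - - / (4 * tau * / tau)))).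
      exact K.
      assert (a <> 0) by (unfold R in Ha; lra). assert (b <> 0) by (unfold R in Hb; lra). assert (tau <> 0) by lra.
      unfold plus; simpl. field. repeat split; auto.
    + apply HP. change (Rabs (1 + / (4 * tau * a) - / (4 * tau * b) - 1) < eps).
      assert (Hte : 0 < tau * eps) by nra.
      assert (Ha' : tau * eps * R < - (tau * eps * a)) by nra.
      assert (Hb' : tau * eps * R < tau * eps * b) by nra.
      assert (HRe : 1 < tau * eps * R).
      { unfold R. replace (tau * eps * (/ tau + / (tau * eps) + 1)) with (eps + 1 + tau * eps) by (field; lra). nra. }
      assert (E1 : Rabs (/ (4 * tau * a)) < eps / 4).
      { rewrite Rabs_Rinv by (intro; nra). rewrite Rabs_mult, (Rabs_right (4 * tau)) by lra.
        rewrite Rabs_left by (unfold R in Ha; lra).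
        apply Rmult_lt_reg_r with (4 * tau * - a). nra. rewrite Rinv_l by nra. nra. }
      assert (E2 : Rabs (/ (4 * tau * b)) < eps / 4).
      { rewrite Rabs_Rinv by (intro; nra). rewrite Rabs_mult, (Rabs_right (4 * tau)) by lra.
        rewrite Rabs_right by (unfold R in Hb; lra).
        apply Rmult_lt_reg_r with (4 * tau * b). nra. rewrite Rinv_l by nra. nra. }
      replace (1 + / (4 * tau * a) - / (4 * tau * b) - 1) with (/ (4 * tau * a) + - / (4 * tau * b)) by ring.
      eapply Rle_lt_trans. apply Rabs_triang. rewrite Rabs_Ropp. lra.
Qed.

Definition Dfun lam tau mu x := - / (2 * PI) * GS lam tau mu x.

Lemma abs_D lam tau mu x : Rabs (Dfun lam tau mu x) = Rabs (GS lam tau mu x) / (2 * PI).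
Proof.
  pose proof PI_gt3. unfold Dfun. rewrite Rabs_mult, Rabs_Ropp, Rabs_right.
  unfold Rdiv; ring. apply Rle_ge, Rlt_le, Rinv_0_lt_compat; lra.
Qed.

Lemma D_bound lam tau mu x : 0 < lam <= 1/2 -> 0 < tau -> mu = 1/100 * lam / tau ->
  Rabs (Dfun lam tau mu x) <= p0F tau x.
Proof.
  intros Hl Ht Hmu. pose proof PI_gt3. rewrite abs_D. unfold p0F.
  destruct Rle_dec as [r|n].
  - pose proof (GS_small lam tau mu x Hl Ht Hmu).
    apply Rmult_le_reg_r with (2 * PI). lra. unfold Rdiv. rewrite Rmult_assoc, Rinv_l by lra. nra.
  - pose proof (GS_large lam tau mu x Hl Ht Hmu ltac:(lra)) as K.
    assert (Hx0 : x <> 0). { intro E; subst. rewrite Rabs_R0 in n. apply n. left. apply Rinv_0_lt_compat; lra. }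
    assert (Hxx : 0 < x ^ 2) by (replace (x^2) with (Rsqr x) by (unfold Rsqr; ring); apply Rsqr_pos_lt; auto).
    set (y := tau * x ^ 2) in *.
    assert (Hy : 0 < y) by (unfold y; nra).
    set (G := Rabs (GS lam tau mu x)) in *.
    assert (HG : G <= 3 / 2 / y).
    { apply Rmult_le_reg_r with y; auto. unfold Rdiv; rewrite Rmult_assoc, Rinv_l; lra. }
    apply Rle_trans with (3 / 2 / y / (2 * PI)).
    { unfold Rdiv. apply Rmult_le_compat_r. apply Rlt_le, Rinv_0_lt_compat; lra. exact HG. }
    replace (4 * tau * x ^ 2) with (4 * y) by (unfold y; ring).
    assert (E : / (4 * y) - 3 / 2 / y / (2 * PI) = (PI - 3) / (4 * PI * y)) by (field; split; lra).
    assert (0 <= (PI - 3) / (4 * PI * y)) by (apply Rdiv_le_0_compat; nra).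
    lra.
Qed.

Lemma D_odd lam tau mu y : 0 < tau -> Dfun lam tau mu (- y) = - Dfun lam tau mu y.
Proof. intros Ht. unfold Dfun. rewrite GS_odd by auto. ring. Qed.

Lemma D_cont lam tau mu x : 0 < lam <= 1/2 -> 0 < tau -> mu = 1/100 * lam / tau ->
  continuous (Dfun lam tau mu) x.
Proof.
  intros Hl Ht Hmu. pose proof PI_gt3.
  apply (proj2 (filterlim_locally _ _)). intros eps.
  assert (Heps := cond_pos eps).
  assert (Hd : 0 < eps / (tau * tau)) by (apply Rdiv_lt_0_compat; nra).
  exists (mkposreal _ Hd). intros y Hy.
  change (Rabs (y - x) < eps / (tau * tau)) in Hy.
  change (Rabs (Dfun lam tau mu y - Dfun lam tau mu x) < eps).
  assert (E : Dfun lam tau mu y - Dfun lam tau mu x = - / (2 * PI) * (GS lam tau mu y - GS lam tau mu x)) by (unfold Dfun; ring).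
  rewrite E, Rabs_mult, Rabs_Ropp, Rabs_right by (apply Rle_ge, Rlt_le, Rinv_0_lt_compat; lra).
  pose proof (GS_lip lam tau mu y x Hl Ht Hmu) as L.
  assert (Hyx : Rabs (y - x) * (tau * tau) < eps).
  { apply Rmult_lt_reg_r with (/ (tau * tau)). apply Rinv_0_lt_compat; nra.
    rewrite Rmult_assoc, Rinv_r by nra. unfold Rdiv in Hy. lra. }
  assert (Hp : 0 < / (2 * PI) < 1) by (split; [apply Rinv_0_lt_compat; lra| rewrite <- Rinv_1; apply Rinv_lt_contravar; lra]).
  assert (Rabs (GS lam tau mu y - GS lam tau mu x) <= Rabs (y - x) * (tau * tau)) by (assert (0 <= Rabs (y - x) * (tau * tau)) by (apply Rmult_le_pos; [apply Rabs_pos| nra]); nra).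
  pose proof (Rabs_pos (GS lam tau mu y - GS lam tau mu x)).
  nra.
Qed.

Lemma D_decay lam tau mu x : 0 < lam <= 1/2 -> 0 < tau -> mu = 1/100 * lam / tau ->
  2 / tau <= Rabs x -> Rabs (Dfun lam tau mu x) <= / (4 * tau) / x ^ 2.
Proof.
  intros Hl Ht Hmu Hx. eapply Rle_trans. apply D_bound; auto.
  unfold p0F. destruct Rle_dec as [r|n].
  - exfalso. assert (0 < / tau) by (apply Rinv_0_lt_compat; lra). unfold Rdiv in Hx. lra.
  - assert (Hx0 : x <> 0). { intro E; subst. rewrite Rabs_R0 in n. apply n. left. apply Rinv_0_lt_compat; lra. }
    right. field. split; lra.
Qed.

Theorem mainTheorem13 :
  exists c0 : R, 0 < c0 < 1 /\
    forall lam tau : R, 0 < lam <= 1 / 2 -> 0 < tau ->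
      let mu := c0 * lam / tau in
      (* DeltaF (hence p1F) is real-valued *)
      (forall x : R, Im (DeltaF lam tau mu x) = 0) /\
      is_pdf (fun x => Re (p1F lam tau mu x)).
Proof.
  exists (1/100). split; [lra|].
  intros lam tau Hl Ht mu.
  assert (Hmu : mu = 1/100 * lam / tau) by reflexivity.
  clearbody mu.
  assert (Ep : forall x, Re (p1F lam tau mu x) = plus (p0F tau x) (Dfun lam tau mu x)).
  { intros x. unfold p1F, DeltaF, Dfun. rewrite fourier_eq by auto. unfold plus; simpl. ring. }
  split.
  - intros x. unfold DeltaF. rewrite fourier_eq by auto. simpl. ring.
  - split.
    + intros x. rewrite Ep. unfold plus; simpl. pose proof (D_bound lam tau mu x Hl Ht Hmu).
      apply Rabs_le_between in H. lra.
    + assert (K := @is_RInt_gen_plus R_NormedModule _ _ _ _ _ _ _ _ (p0_int tau Ht)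
        (decay_int (Dfun lam tau mu) (2 / tau) (/ (4 * tau))
          (fun x => D_cont lam tau mu x Hl Ht Hmu) (fun y => D_odd lam tau mu y Ht)
          ltac:(apply Rdiv_lt_0_compat; lra) ltac:(apply Rlt_le, Rinv_0_lt_compat; lra)
          (fun x Hx => D_decay lam tau mu x Hl Ht Hmu Hx))).
      change (is_RInt_gen (fun y : R => plus (p0F tau y) (Dfun lam tau mu y)) (Rbar_locally m_infty) (Rbar_locally p_infty) (1 + 0)) in K. rewrite Rplus_0_r in K.
      apply (@is_RInt_gen_ext R_NormedModule _ _ _ _ (fun y => plus (p0F tau y) (Dfun lam tau mu y))).
      * apply (Filter_prod _ _ _ (fun _ => True) (fun _ => True)).
        exists 0; auto. exists 0; auto. intros a b _ _ x _. rewrite Ep. reflexivity.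
      * exact K.
Qed.
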